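(* Let $r \in \mathbb{Q}_{>0}$ be such that $S_r$ is atomic. Then $\rho(S_r) < \infty$ if and only if $\rho_k(S_r) < \infty$ for every $k \in \mathbb{N}$.
   Context: For $q \in \mathbb{Q}_{>0}$, $\mathsf{n}(q),\mathsf{d}(q)$ are the positive coprime integers with $q = \mathsf{n}(q)/\mathsf{d}(q)$. $S_r$ is the additive submonoid of $(\mathbb{Q}_{\ge 0},+)$ generated by $\{r^n : n \in \mathbb{N}_0\}$; it is atomic exactly when $r=1$ or $\mathsf{n}(r)>1$. $\mathsf{L}(x)$ denotes the set of lengths of factorizations of $x$ into atoms. The elasticity of $x \ne 0$ is $\rho(x) = \sup \mathsf{L}(x)/\inf \mathsf{L}(x)$, and $\rho(S_r) = \sup\{\rho(x) : x \ne 0\}$. For $k \in \mathbb{N}$, $\mathcal{U}_k(S_r)$ is the set of $\ell \in \mathbb{N}$ for which there exist atoms $a_1,\dots,a_k,b_1,\dots,b_\ell$ with $a_1+\dots+a_k = b_1 + \dots + b_\ell$, and $\rho_k(S_r) = \sup \mathcal{U}_k(S_r)$ is the $k$-th local elasticity. *)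

(* Defs.v *)
From HB Require Import structures.
From mathcomp Require Import all_boot all_order all_algebra.
Set Implicit Arguments. Unset Strict Implicit. Unset Printing Implicit Defensive.
Import Order.TTheory GRing.Theory Num.Theory.
Local Open Scope ring_scope.

Definition inS (r x : rat) : Prop :=
  exists s : seq nat, x = \sum_(n <- s) r ^+ n.

Definition is_atom (r a : rat) : Prop :=
  inS r a /\ a != 0 /\
  forall b c, inS r b -> inS r c -> a = b + c -> b = 0 \/ c = 0.

Definition atomic (r : rat) : Prop :=
  forall x, inS r x -> x != 0 ->
    exists s : seq rat, (forall a, a \in s -> is_atom r a) /\ x = \sum_(a <- s) a.

Definition in_lengths (r x : rat) (l : nat) : Prop :=
  exists s : seq rat, (forall a, a \in s -> is_atom r a) /\
    size s = l /\ x = \sum_(a <- s) a.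

(* ρ(S_r) < ∞ : there is a finite bound M with sup L(x) <= M * inf L(x)
   for every nonzero x ∈ S_r, i.e. l1 <= M * l2 for all l1, l2 ∈ L(x). *)
Definition elasticity_finite (r : rat) : Prop :=
  exists M : nat, forall x, inS r x -> x != 0 ->
    forall l1 l2, in_lengths r x l1 -> in_lengths r x l2 -> (l1 <= M * l2)%N.

Definition in_Uk (r : rat) (k l : nat) : Prop :=
  (0 < l)%N /\
  exists a b : seq rat,
    (forall x, x \in a -> is_atom r x) /\ (forall x, x \in b -> is_atom r x) /\
    size a = k /\ size b = l /\ \sum_(x <- a) x = \sum_(x <- b) x.

Definition local_elasticity_finite (r : rat) (k : nat) : Prop :=
  exists M : nat, forall l, in_Uk r k l -> (l <= M)%N.

(* Main.v *)
Require Import Defs.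
From mathcomp Require Import all_boot all_order all_algebra.
From mathcomp Require Import ring.
Import Order.TTheory GRing.Theory Num.Theory.
Local Open Scope ring_scope.

Section Aux.
Variable r : rat.
Hypothesis hr : 0 < r.

Lemma sumpow_ge0 (s : seq nat) : 0 <= \sum_(e <- s) r ^+ e.
Proof. by apply: sumr_ge0 => e _; rewrite exprn_ge0 // ltW. Qed.

Lemma inS_ge0 x : inS r x -> 0 <= x.
Proof. by case=> s ->; apply: sumpow_ge0. Qed.

Lemma atom_gt0 a : is_atom r a -> 0 < a.
Proof. by case=> /inS_ge0 h [h0 _]; rewrite lt_def h0 h. Qed.

Lemma sum_atoms_ge0 (s : seq rat) : (forall a, a \in s -> is_atom r a) ->
  0 <= \sum_(a <- s) a.
Proof. by move=> H; rewrite big_seq; apply: sumr_ge0 => a /H /atom_gt0 /ltW. Qed.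

Lemma sum_atoms_gt0 (s : seq rat) : (forall a, a \in s -> is_atom r a) ->
  (0 < size s)%N -> 0 < \sum_(a <- s) a.
Proof.
case: s => // a s H _; rewrite big_cons.
apply: ltr_wpDr; first by apply: sum_atoms_ge0 => b hb; apply: H; rewrite inE hb orbT.
by apply: atom_gt0; apply: H; rewrite inE eqxx.
Qed.

Lemma inS_sum_atoms (s : seq rat) : (forall a, a \in s -> is_atom r a) ->
  inS r (\sum_(a <- s) a).
Proof.
elim: s => [|a s IH] H; first by exists [::]; rewrite !big_nil.
have [[t ht] _] := H a (mem_head _ _).
have [t' ht'] := IH (fun b hb => H b (@mem_behead _ (a :: s) b hb)).
by exists (t ++ t'); rewrite big_cons big_cat /= ht ht'.
Qed.

Hypothesis hat : atomic r.

Lemma fact_ge (s : seq nat) : exists b : seq rat,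
  (forall a, a \in b -> is_atom r a) /\ (size s <= size b)%N /\
  \sum_(e <- s) r ^+ e = \sum_(a <- b) a.
Proof.
elim: s => [|e s [b [Hb [Hs Hsum]]]]; first by exists [::]; rewrite !big_nil.
have hS : inS r (r ^+ e) by exists [:: e]; rewrite big_seq1.
have hne : r ^+ e != 0 by rewrite expf_neq0 // gt_eqF.
have [A [HA HAs]] := hat _ hS hne.
exists (A ++ b); split.
  by move=> a; rewrite mem_cat => /orP [/HA|/Hb].
split; last by rewrite big_cons big_cat /= HAs Hsum.
rewrite size_cat /=; case: A HA HAs => [|a A] HA HAs.
  by move: hne; rewrite HAs big_nil eqxx.
by rewrite addSn ltnS; apply: leq_trans Hs (leq_addl _ _).
Qed.

Lemma rep_seq (A : seq rat) (c : nat) : (forall a, a \in A -> is_atom r a) ->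
  exists a : seq rat, (forall x, x \in a -> is_atom r x) /\
   size a = (c * size A)%N /\ \sum_(x <- a) x = c%:R * \sum_(x <- A) x.
Proof.
move=> HA; elim: c => [|c [a [Ha [Hs Hsum]]]]; first by exists [::]; rewrite big_nil mul0r.
exists (A ++ a); split; first by move=> x; rewrite mem_cat => /orP [/HA|/Ha].
by rewrite size_cat Hs mulSn big_cat Hsum /= -addn1 natrD mulrDl mul1r addrC.
Qed.

End Aux.

Lemma sum_nseq (r : rat) k e : \sum_(x <- nseq k e) r ^+ x = k%:R * r ^+ e.
Proof.
elim: k => [|k IH]; first by rewrite big_nil mul0r.
by rewrite /= big_cons IH -addn1 natrD mulrDl mul1r addrC.
Qed.

Lemma sum_nseqr (k : nat) (a : rat) : \sum_(x <- nseq k a) x = k%:R * a.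
Proof.
elim: k => [|k IH]; first by rewrite big_nil mul0r.
by rewrite /= big_cons IH -addn1 natrD mulrDl mul1r addrC.
Qed.

Lemma iden_lt (r : rat) (nn dn : nat) (hrel : nn%:R = r * dn%:R) (hlt : (nn <= dn)%N) m :
  exists s : seq nat, size s = ((dn - nn) * m)%N /\
    nn%:R = \sum_(e <- s) r ^+ e + dn%:R * r ^+ m.+1.
Proof.
elim: m => [|m [s [Hs Hsum]]].
  by exists [::]; rewrite big_nil add0r muln0 expr1 hrel mulrC.
exists (nseq (dn - nn) m.+1 ++ s); split.
  by rewrite size_cat size_nseq Hs mulnS.
rewrite big_cat /= sum_nseq Hsum natrB //.
rewrite [in RHS](exprS r m.+1) mulrA [dn%:R * r]mulrC -hrel.
ring.
Qed.

Lemma iden_gt (r : rat) (nn dn : nat) (hrel : nn%:R = r * dn%:R) (hlt : (dn <= nn)%N) m :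
  exists s : seq nat, size s = ((nn - dn) * m)%N /\
    dn%:R * r ^+ m = \sum_(e <- s) r ^+ e + dn%:R.
Proof.
elim: m => [|m [s [Hs Hsum]]].
  by exists [::]; rewrite big_nil add0r muln0 expr0 mulr1.
exists (nseq (nn - dn) m ++ s); split.
  by rewrite size_cat size_nseq Hs mulnS.
rewrite big_cat /= sum_nseq -addrA -Hsum natrB // exprS mulrA [dn%:R * r]mulrC -hrel.
ring.
Qed.

Lemma le_sum_mem (r : rat) (hr : 0 < r) e (s : seq nat) : e \in s ->
  r ^+ e <= \sum_(f <- s) r ^+ f.
Proof.
elim: s => // f s IH; rewrite inE big_cons => /orP [/eqP ->|/IH h].
  by rewrite lerDl sumpow_ge0.
apply: (le_trans h); rewrite lerDr exprn_ge0 // ltW //.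
Qed.

Lemma pow_atom (r : rat) (nn dn : nat) (hr : 1 < r) (hrel : nn%:R = r * dn%:R)
  (hd : (2 <= dn)%N) (hco : coprime nn dn) m : is_atom r (r ^+ m).
Proof.
have hr0 : 0 < r by apply: lt_trans hr.
split; first by exists [:: m]; rewrite big_seq1.
split; first by rewrite expf_neq0 // gt_eqF.
move=> b c [s1 ->] [s2 ->] E.
have [b0|bn0] := eqVneq (\sum_(e <- s1) r ^+ e) 0; first by left.
have [c0|cn0] := eqVneq (\sum_(e <- s2) r ^+ e) 0; first by right.
exfalso.
have bp : 0 < \sum_(e <- s1) r ^+ e by rewrite lt_def bn0 sumpow_ge0.
have cp : 0 < \sum_(e <- s2) r ^+ e by rewrite lt_def cn0 sumpow_ge0.
have E' : r ^+ m = \sum_(e <- s1 ++ s2) r ^+ e by rewrite big_cat.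
have Hlt : forall e, e \in s1 ++ s2 -> (e < m)%N.
  move=> e; rewrite mem_cat => /orP [] he; rewrite -(ltr_eXn2l hr) E.
    by apply: (le_lt_trans (@le_sum_mem r hr0 e _ he)); rewrite ltrDl.
  by apply: (le_lt_trans (@le_sum_mem r hr0 e _ he)); rewrite ltrDr.
set s := s1 ++ s2 in E' Hlt.
have Enat : (nn ^ m = \sum_(e <- s) nn ^ e * dn ^ (m - e))%N.
  apply/eqP; rewrite -(eqr_nat rat) natr_sum.
  have -> : (nn ^ m)%:R = (dn%:R : rat) ^+ m * r ^+ m.
    by rewrite natrX hrel exprMn mulrC.
  rewrite E' big_distrr /= big_seq [X in _ == X]big_seq; apply/eqP.
  apply: eq_bigr => e /Hlt he.
  rewrite natrM !natrX hrel exprMn -mulrA -exprD subnKC ?(ltnW he) //.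
  by rewrite mulrC.
have hdv : (dn %| nn ^ m)%N.
  rewrite Enat big_seq; apply: dvdn_sum => e /Hlt he.
  by apply: dvdn_mull; apply: dvdn_exp; [rewrite subn_gt0|].
have : coprime dn (nn ^ m) by rewrite coprime_sym coprimeXl.
by rewrite /coprime (gcdn_idPl hdv) => /eqP d1; rewrite d1 in hd.
Qed.

Lemma sum_ones (b : seq rat) : (forall a, a \in b -> a = 1) ->
  \sum_(a <- b) a = (size b)%:R.
Proof.
elim: b => [|a b IH] H; first by rewrite big_nil.
rewrite big_cons IH ?(H a (mem_head _ _)) /=; last by move=> x hx; apply: H; rewrite inE hx orbT.
by rewrite -addn1 natrD addrC.
Qed.

Theorem corollary4p10 (r : rat) (hr : 0 < r) (hat : atomic r) :
  elasticity_finite r <->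
  (forall k : nat, (0 < k)%N -> local_elasticity_finite r k).
Proof.
split.
  move=> [M HM] k k0; exists (M * k)%N.
  move=> l [l0 [a [b [Ha [Hb [Sa [Sb Eab]]]]]]].
  have hS := @inS_sum_atoms r a Ha.
  have hx : \sum_(x <- a) x != 0 by rewrite gt_eqF // (@sum_atoms_gt0 r hr a Ha) // Sa.
  apply: (HM _ hS hx).
    by exists b.
  by exists a.
move=> H.
set nn := `|numq r|%N; set dn := `|denq r|%N.
have hnz : numq r = nn :> int by rewrite /nn gtz0_abs // numq_gt0.
have hdz : denq r = dn :> int by rewrite /dn absz_denq.
have hrel : (nn%:R : rat) = r * dn%:R.
  by have := numqE r; rewrite hnz hdz.
have hco : coprime nn dn by apply: coprime_num_den.
have dn0 : (0 < dn)%N by rewrite -(ltz_nat 0) -hdz denq_gt0.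
have nn0 : (0 < nn)%N by rewrite -(ltz_nat 0) -hnz numq_gt0.
have [d1|dn1] := eqVneq dn 1%N.
  have rE : r = nn%:R by rewrite hrel d1 mulr1.
  have Snat : forall x, inS r x -> exists k : nat, x = k%:R.
    move=> x [s ->]; exists (\sum_(e <- s) nn ^ e)%N.
    by rewrite natr_sum rE; apply: eq_bigr => e _; rewrite natrX.
  have atom1 : forall a, is_atom r a -> a = 1.
    move=> a ha; have [hS [ha0 hsp]] := ha.
    have [k kE] := Snat a hS.
    have k0 : k != 0%N by apply: contraNneq ha0 => k0; rewrite kE k0.
    have [k1|k2] := leqP k 1%N.
      by rewrite kE; suff -> : k = 1%N by []; apply/eqP; rewrite eqn_leq k1 lt0n k0.
    have h1 : inS r 1 by exists [:: 0%N]; rewrite big_seq1 expr0.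
    have h2 : inS r (k.-1)%:R by exists (nseq k.-1 0%N); rewrite sum_nseq expr0 mulr1.
    have E : a = 1 + (k.-1)%:R by rewrite kE -[in LHS](prednK (ltnW k2)) -addn1 natrD addrC.
    case: (hsp _ _ h1 h2 E) => /eqP; first by rewrite oner_eq0.
    by rewrite pnatr_eq0 -subn1 subn_eq0 leqNgt k2.
  exists 1%N => x hS hx l1 l2 [b1 [Hb1 [S1 E1]]] [b2 [Hb2 [S2 E2]]].
  rewrite mul1n.
  move: E1 E2; rewrite !sum_ones; first last.
  - by move=> a /Hb1 /atom1.
  - by move=> a /Hb2 /atom1.
  rewrite S1 S2 => -> /eqP; rewrite eqr_nat => /eqP ->.
  by rewrite leqnn.
have dn2 : (2 <= dn)%N by rewrite ltn_neqAle eq_sym dn1 dn0.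
exfalso.
have [rlt|rgt|req] := ltgtP r 1.
- have nd : (nn < dn)%N.
    by rewrite -(ltr_nat rat) hrel -{2}(mul1r (dn%:R)) ltr_pM2r // ltr0n.
  have h1 : inS r 1 by exists [:: 0%N]; rewrite big_seq1 expr0.
  have [A [HA EA]] := hat 1 h1 (oner_neq0 _).
  have A0 : (0 < size A)%N.
    by case: A HA EA => // _ /eqP; rewrite big_nil oner_eq0.
  have [M HM] := H (nn * size A)%N (ltac:(by rewrite muln_gt0 nn0 A0)).
  have [s [Hs Es]] := @iden_lt r nn dn hrel (ltnW nd) M.
  have [b [Hb [Sb Eb]]] := @fact_ge r hr hat (s ++ nseq dn M.+1).
  have [a [Ha [Sa Ea]]] := @rep_seq r A nn HA.
  have : (size b <= M)%N.
    apply: HM; split.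
      by apply: leq_trans Sb; rewrite size_cat Hs size_nseq addn_gt0 dn0 orbT.
    exists a, b; do 4! split => //.
    by rewrite Ea -EA mulr1 -Eb big_cat /= sum_nseq -Es.
  rewrite leqNgt => /negP; apply; apply: leq_trans Sb.
  rewrite size_cat Hs size_nseq -addn1 leq_add //.
  by apply: leq_pmull; rewrite subn_gt0.
- have nd : (dn < nn)%N.
    by rewrite -(ltr_nat rat) hrel -{1}(mul1r (dn%:R)) ltr_pM2r // ltr0n.
  have [M HM] := H dn dn0.
  have [s [Hs Es]] := @iden_gt r nn dn hrel (ltnW nd) M.
  have [b [Hb [Sb Eb]]] := @fact_ge r hr hat (s ++ nseq dn 0%N).
  have : (size b <= M)%N.
    apply: HM; split.
      by apply: leq_trans Sb; rewrite size_cat Hs size_nseq addn_gt0 dn0 orbT.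
    exists (nseq dn (r ^+ M)), b; split.
      move=> x; rewrite mem_nseq => /andP [_ /eqP ->].
      exact: (@pow_atom r nn dn rgt hrel) dn2 hco M.
    split => //; split; first by rewrite size_nseq.
    split => //.
    by rewrite sum_nseqr Es -Eb big_cat /= sum_nseq expr0 mulr1.
  rewrite leqNgt => /negP; apply; apply: leq_trans Sb.
  rewrite size_cat Hs size_nseq -addn1 leq_add //.
  by apply: leq_pmull; rewrite subn_gt0.
- move: dn1; rewrite /dn req; by [].
Qed.
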